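(* Let $G$ and $H$ be groups with $\mathrm{Con}(G)=\mathrm{Con}(H)$. Suppose $G$ satisfies the following ping-pong conditions: there are a set $X$ with a $G$-action, subgroups $\Gamma_1,\Gamma_2$ of $G$ with $|\Gamma_1|\ge3$, $|\Gamma_2|\ge2$, and subsets $X_1,X_2\subseteq X$ with $X_2\not\subseteq X_1$, such that $\gamma_1(X_2)\subseteq X_1$ and $\gamma_2(X_1)\subseteq X_2$ for all nonidentity $\gamma_1\in\Gamma_1$, $\gamma_2\in\Gamma_2$. Then $H$ also satisfies these conditions (for some set with an $H$-action, some subgroups of $H$ and some subsets).
   Context: For an action $G\curvearrowright X$, an ordered tuple $\mathfrak{g}=(g_1,\dots,g_n)$ of elements of $G$ and a finite partition $\mathcal{E}=\{E_1,\dots,E_m\}$ of $X$, a configuration is a tuple $C=(C_0,\dots,C_n)\in\{1,\dots,m\}^{n+1}$ such that some $x\in E_{C_0}$ satisfies $g_i\cdot x\in E_{C_i}$ for $i=1,\dots,n$; the set of these is $\mathrm{Con}(\mathfrak{g},\mathcal{E};X)$. $\mathrm{Con}(G)$ is the collection $\{\mathrm{Con}(\mathfrak{g},\mathcal{E};G)\}$ over all finite tuples $\mathfrak{g}$ in $G$ and finite partitions $\mathcal{E}$ of $G$, for the action of $G$ on itself by left multiplication. *)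

(* Defs.v *)
From mathcomp Require Import all_boot.
Set Implicit Arguments. Unset Strict Implicit. Unset Printing Implicit Defensive.

Record AbsGroup := {
  gcar :> Type;
  gmul : gcar -> gcar -> gcar;
  gone : gcar;
  ginv : gcar -> gcar;
  gmulA : forall x y z, gmul x (gmul y z) = gmul (gmul x y) z;
  gmul1 : forall x, gmul gone x = x;
  gmulV : forall x, gmul (ginv x) x = gone
}.

Definition is_action (G : AbsGroup) (X : Type) (act : G -> X -> X) : Prop :=
  (forall x, act (gone G) x = x) /\
  (forall g h x, act (gmul g h) x = act g (act h x)).

Definition is_subgroup (G : AbsGroup) (S : G -> Prop) : Prop :=
  S (gone G) /\ (forall x y, S x -> S y -> S (gmul x y)) /\
  (forall x, S x -> S (ginv x)).

Definition card_ge3 (G : AbsGroup) (S : G -> Prop) : Prop :=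
  exists a b c, S a /\ S b /\ S c /\ a <> b /\ a <> c /\ b <> c.
Definition card_ge2 (G : AbsGroup) (S : G -> Prop) : Prop :=
  exists a b, S a /\ S b /\ a <> b.

Definition PingPong (G : AbsGroup) : Prop :=
  exists (X : Type) (act : G -> X -> X),
    is_action act /\
    exists (Gam1 Gam2 : G -> Prop) (X1 X2 : X -> Prop),
      is_subgroup Gam1 /\ is_subgroup Gam2 /\
      card_ge3 Gam1 /\ card_ge2 Gam2 /\
      (exists x, X2 x /\ ~ X1 x) /\
      (forall g1, Gam1 g1 -> g1 <> gone G -> forall x, X2 x -> X1 (act g1 x)) /\
      (forall g2, Gam2 g2 -> g2 <> gone G -> forall x, X1 x -> X2 (act g2 x)).

(* A finite partition {E_1,...,E_m} of G, encoded by the labelling map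
   E : G -> 'I_m (E x = i iff x lies in the (i+1)-th block); the blocks are
   nonempty, i.e. E is surjective. *)
Definition is_partition (G : AbsGroup) (m : nat) (E : G -> 'I_m) : Prop :=
  forall i, exists x, E x = i.

(* Con(g, E; G) for g = (g_1,...,g_n) : 'I_n -> G (left multiplication action);
   configurations C = (C_0,...,C_n) : 'I_n.+1 -> 'I_m (labels shifted to 0..m-1). *)
Definition Con (G : AbsGroup) (n m : nat) (g : 'I_n -> G) (E : G -> 'I_m)
    (C : 'I_n.+1 -> 'I_m) : Prop :=
  exists x : G, E x = C ord0 /\ forall i : 'I_n, E (gmul (g i) x) = C (lift ord0 i).

Definition in_ConG (G : AbsGroup) (n m : nat) (S : ('I_n.+1 -> 'I_m) -> Prop) : Prop :=
  exists (g : 'I_n -> G) (E : G -> 'I_m),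
    is_partition E /\ forall C, S C <-> Con g E C.

Definition ConEq (G H : AbsGroup) : Prop :=
  forall n m (S : ('I_n.+1 -> 'I_m) -> Prop), in_ConG G S <-> in_ConG H S.

(* Main.v *)
Require Import Defs.
From mathcomp Require Import all_boot.
From Stdlib Require Import Classical ClassicalEpsilon.
Set Implicit Arguments. Unset Strict Implicit. Unset Printing Implicit Defensive.

Lemma gmulVr (G : AbsGroup) (x : G) : gmul x (ginv x) = gone G.
Proof.
have h : gmul x (ginv x) =
  gmul (gmul (ginv (ginv x)) (ginv x)) (gmul x (ginv x)) by rewrite gmulV gmul1.
rewrite h -(gmulA (ginv (ginv x))) (gmulA (ginv x) x (ginv x)) gmulV gmul1.
by rewrite gmulV.
Qed.

Lemma gmul1r (G : AbsGroup) (x : G) : gmul x (gone G) = x.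
Proof. by rewrite -(gmulV x) gmulA gmulVr gmul1. Qed.

Lemma ginv_uniq (G : AbsGroup) (x y : G) : gmul y x = gone G -> y = ginv x.
Proof.
move=> H.
by rewrite -(gmul1r y) -(gmulVr x) gmulA H gmul1.
Qed.

Lemma ginvM (G : AbsGroup) (x y : G) : ginv (gmul x y) = gmul (ginv y) (ginv x).
Proof.
symmetry; apply: ginv_uniq.
by rewrite -gmulA (gmulA (ginv x) x y) gmulV gmul1 gmulV.
Qed.

Lemma ginv_neq1 (G : AbsGroup) (x : G) : x <> gone G -> ginv x <> gone G.
Proof. move=> hx hi; apply: hx. by rewrite -(gmulVr x) hi gmul1r. Qed.

Lemma ginvK (G : AbsGroup) (x : G) : ginv (ginv x) = x.
Proof. symmetry; apply: ginv_uniq; exact: gmulVr. Qed.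

Lemma ginv1 (G : AbsGroup) : ginv (gone G) = gone G.
Proof. symmetry; apply: ginv_uniq; exact: gmul1. Qed.

Fixpoint pw (K : AbsGroup) (g : K) (n : nat) : K :=
  match n with 0 => gone K | S n => gmul g (pw g n) end.

Lemma pw_comm (K : AbsGroup) (g : K) n : gmul (pw g n) g = gmul g (pw g n).
Proof.
elim: n => [|n IH] /=; first by rewrite gmul1 gmul1r.
by rewrite -gmulA IH.
Qed.

Lemma ginv_pw (K : AbsGroup) (g : K) n : ginv (pw g n) = pw (ginv g) n.
Proof.
elim: n => [|n IH] /=; first exact: ginv1.
by rewrite ginvM IH pw_comm.
Qed.

Definition cyc (K : AbsGroup) (u : K) (x : K) : Prop :=
  exists n, x = pw u n \/ x = pw (ginv u) n.

Lemma cycL (K : AbsGroup) (u y : K) :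
  cyc u y -> cyc u (gmul u y) /\ cyc u (gmul (ginv u) y).
Proof.
move=> [n [->|->]]; split.
- by exists n.+1; left.
- case: n => [|k] /=.
  + by exists 1; right; rewrite /= !gmul1r.
  + by exists k; left; rewrite gmulA gmulV gmul1.
- case: n => [|k] /=.
  + by exists 1; left; rewrite /= !gmul1r.
  + by exists k; right; rewrite gmulA gmulVr gmul1.
- by exists n.+1; right.
Qed.

Lemma cyc_sub (K : AbsGroup) (u : K) : is_subgroup (cyc u).
Proof.
split; first by exists 0; left.
split.
- move=> x y [n [->|->]] hy.
  + elim: n => [|n IH] /=; first by rewrite gmul1.
    by rewrite -gmulA; exact: (cycL IH).1.
  + elim: n => [|n IH] /=; first by rewrite gmul1.
    by rewrite -gmulA; exact: (cycL IH).2.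
- move=> x [n [->|->]]; rewrite ginv_pw.
  + by exists n; right.
  + by exists n; left; rewrite ginvK.
Qed.

Definition cb (P : Prop) : bool := if excluded_middle_informative P then true else false.
Lemma cbP (P : Prop) : reflect P (cb P).
Proof. rewrite /cb; case: excluded_middle_informative => h; by constructor. Qed.

Lemma compress (T : AbsGroup) (Fi : finType) (f : T -> Fi) :
  exists m (E : T -> 'I_m) (j : 'I_m -> Fi), is_partition E /\ forall x, j (E x) = f x.
Proof.
pose r := [seq y <- enum Fi | cb (exists x, f x = y)].
have inr : forall x, f x \in r.
  by move=> x; rewrite mem_filter mem_enum andbT; apply/cbP; exists x.
have ltr : forall x, index (f x) r < size r by move=> x; rewrite index_mem.
exists (size r), (fun x => Ordinal (ltr x)), (fun i => nth (f (gone T)) r i). split.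
- move=> i. have : nth (f (gone T)) r i \in r := mem_nth _ (ltn_ord i).
  rewrite mem_filter => /andP [/cbP [x hx] _]. exists x. apply: val_inj => /=.
  rewrite hx index_uniq //; last by rewrite filter_uniq // enum_uniq.
- move=> x /=; exact: nth_index.
Qed.

Definition F := {ffun 'I_7 -> bool}.
Definition iX1 : 'I_7 := @Ordinal 7 0 isT.
Definition iX2 : 'I_7 := @Ordinal 7 1 isT.
Definition iAp : 'I_7 := @Ordinal 7 2 isT.
Definition iAm : 'I_7 := @Ordinal 7 3 isT.
Definition iBp : 'I_7 := @Ordinal 7 4 isT.
Definition iBm : 'I_7 := @Ordinal 7 5 isT.

Definition Good (l0 l1 l2 : F) : Prop :=
  (l0 iAp || l0 iX2 -> l1 iAp) /\
  (l1 iAm || l1 iX2 -> l0 iAm) /\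
  (l0 iBp || l0 iX1 -> l2 iBp) /\
  (l2 iBm || l2 iX1 -> l0 iBm) /\
  (l0 iAp -> l0 iX1) /\ (l0 iAm -> l0 iX1) /\
  (l0 iBp -> l0 iX2) /\ (l0 iBm -> l0 iX2).

Definition Facts (K : AbsGroup) : Prop :=
  exists (u v : K) (f : K -> F),
    (forall x, Good (f x) (f (gmul u x)) (f (gmul v x))) /\
    (exists x, f x iX2 /\ ~~ f x iX1) /\
    (exists x, f (gmul v x) <> f x).

Definition extg (K : AbsGroup) n (h : 'I_n -> K) (k : 'I_n.+1) : K :=
  match unlift ord0 k with Some i => h i | None => gone K end.

Lemma Con_self (K : AbsGroup) n m (h : 'I_n -> K) (E : K -> 'I_m) x :
  Con h E (fun k => E (gmul (extg h k) x)).
Proof.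
exists x; split; first by rewrite /extg unlift_none gmul1.
by move=> i; rewrite /extg liftK.
Qed.

Lemma transfer (G H : AbsGroup) : ConEq G H -> Facts G -> Facts H.
Proof.
move=> hc [u [v [f [hG [[x1 [e1a e1b]] [x2 e2]]]]]].
have [m [E [j [hp hj]]]] := compress f.
pose g : 'I_2 -> G := fun i => if val i == 0 then u else v.
have hin : in_ConG G (Con g E) by exists g, E; split.
have [g' [E' [hp' heq]]] := (hc 2 m (Con g E)).1 hin.
have A : forall x', exists x, E x = E' x' /\
    forall i, E (gmul (g i) x) = E' (gmul (g' i) x').
  move=> x'. have /heq [x [hx hi]] := Con_self g' E' x'.
  exists x; split; first by rewrite hx /extg unlift_none gmul1.
  by move=> i; rewrite hi /extg liftK.
have B : forall x, exists x', E' x' = E x /\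
    forall i, E' (gmul (g' i) x') = E (gmul (g i) x).
  move=> x. have /heq [x' [hx hi]] := Con_self g E x.
  exists x'; split; first by rewrite hx /extg unlift_none gmul1.
  by move=> i; rewrite hi /extg liftK.
exists (g' ord0), (g' ord_max), (fun x => j (E' x)). split; [|split].
- move=> x'. have [x [hx hi]] := A x'.
  rewrite -hx -(hi ord0) -(hi ord_max) !hj. exact: hG.
- have [x' [hx _]] := B x1. exists x'; by rewrite hx hj.
- have [x' [hx hi]] := B x2. exists x'. rewrite (hi ord_max) hx !hj. exact: e2.
Qed.

Lemma facts_pingpong (H : AbsGroup) : Facts H -> PingPong H.
Proof.
move=> [u [v [f [hG [[x0 [h2 h1]] [y0 hy0]]]]]].
have Ap : forall k x, f x iAp || f x iX2 -> f (gmul (pw u k.+1) x) iAp.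
  move=> k; elim: k => [|k IH] x hx /=.
    rewrite gmul1r; exact: (hG x).1.
  rewrite -gmulA; apply: (hG _).1; by rewrite IH.
have Am : forall k x, f x iAm || f x iX2 -> f (gmul (pw (ginv u) k.+1) x) iAm.
  have st : forall y, f y iAm || f y iX2 -> f (gmul (ginv u) y) iAm.
    move=> y hy; apply: (hG _).2.1. by rewrite gmulA gmulVr gmul1.
  move=> k; elim: k => [|k IH] x hx /=.
    rewrite gmul1r; exact: st.
  rewrite -gmulA; apply: st; by rewrite IH.
have Bp : forall k x, f x iBp || f x iX1 -> f (gmul (pw v k.+1) x) iBp.
  move=> k; elim: k => [|k IH] x hx /=.
    rewrite gmul1r; exact: (hG x).2.2.1.
  rewrite -gmulA; apply: (hG _).2.2.1; by rewrite IH.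
have Bm : forall k x, f x iBm || f x iX1 -> f (gmul (pw (ginv v) k.+1) x) iBm.
  have st : forall y, f y iBm || f y iX1 -> f (gmul (ginv v) y) iBm.
    move=> y hy; apply: (hG _).2.2.2.1. by rewrite gmulA gmulVr gmul1.
  move=> k; elim: k => [|k IH] x hx /=.
    rewrite gmul1r; exact: st.
  rewrite -gmulA; apply: st; by rewrite IH.
have U1 : forall y, f y iAp -> f y iX1 by move=> y; exact: (hG y).2.2.2.2.1.
have U2 : forall y, f y iAm -> f y iX1 by move=> y; exact: (hG y).2.2.2.2.2.1.
have U3 : forall y, f y iBp -> f y iX2 by move=> y; exact: (hG y).2.2.2.2.2.2.1.
have U4 : forall y, f y iBm -> f y iX2 by move=> y; exact: (hG y).2.2.2.2.2.2.2.
have nx0 : ~ f x0 iX1 by apply/negP.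
exists H, (@gmul H). split.
  split; [exact: gmul1 | by move=> g h x; rewrite gmulA].
exists (cyc u), (cyc v), (fun x => f x iX1), (fun x => f x iX2).
split; first exact: cyc_sub.
split; first exact: cyc_sub.
split.
  exists (gone H), u, (ginv u). split; first by exists 0; left.
  split; first by exists 1; left; rewrite /= gmul1r.
  split; first by exists 1; right; rewrite /= gmul1r.
  split.
    move=> E; apply: nx0; apply: U1.
    have := Ap 0 x0; rewrite /= gmul1r -E gmul1; apply; by rewrite h2 orbT.
  split.
    move=> E; apply: nx0; apply: U2.
    have := Am 0 x0; rewrite /= gmul1r -E gmul1; apply; by rewrite h2 orbT.
  move=> E; apply: nx0; apply: U1.
  have := Ap 1 x0; rewrite /= gmul1r {1}E gmulV gmul1; apply; by rewrite h2 orbT.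
split.
  exists (gone H), v. split; first by exists 0; left.
  split; first by exists 1; left; rewrite /= gmul1r.
  move=> E; apply: hy0; by rewrite -E gmul1.
split; first by exists x0; split.
split.
  move=> g [n [->|->]] hn x hx; case: n hn => [|k] hn //.
  - apply: U1; apply: Ap; by rewrite hx orbT.
  - apply: U2; apply: Am; by rewrite hx orbT.
move=> g [n [->|->]] hn x hx; case: n hn => [|k] hn //.
- apply: U3; apply: Bp; by rewrite hx orbT.
- apply: U4; apply: Bm; by rewrite hx orbT.
Qed.

Definition lbl7 (X : Type) (P0 P1 P2 P3 P4 P5 P6 : X -> Prop) (y : X) : F :=
  [ffun i : 'I_7 => cb (match val i with 0 => P0 y | 1 => P1 y | 2 => P2 y
                        | 3 => P3 y | 4 => P4 y | 5 => P5 y | _ => P6 y end)].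

Lemma pingpong_facts (G : AbsGroup) : PingPong G -> Facts G.
Proof.
move=> [X [act [[h1 h2] [G1s [G2s [X1 [X2 [[s1 [sM sV]] [[t1 [tM tV]]
  [c3 [c2 [[x0 [hx0a hx0b]] [p1 p2]]]]]]]]]]]]].
have ail : forall g y, act (ginv g) (act g y) = y.
  by move=> g y; rewrite -h2 gmulV h1.
have air : forall g y, act g (act (ginv g) y) = y.
  by move=> g y; rewrite -h2 gmulVr h1.
have [p [q [hp [hq [np [nq npq]]]]]] : exists p q, G1s p /\ G1s q /\
    p <> gone G /\ q <> gone G /\ p <> q.
  move: c3 => [a [b [c [ha [hb [hc [nab [nac nbc]]]]]]]].
  case: (classic (a = gone G)) => [ea|na].
    exists b, c; do !split => //; [move=> e; apply: nab; by rewrite ea e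
                                   | move=> e; apply: nac; by rewrite ea e].
  case: (classic (b = gone G)) => [eb|nb].
    exists a, c; do !split => //; move=> e; apply: nbc; by rewrite eb e.
  by exists a, b.
have [a [b [ha [hb [na [nb nba]]]]]] : exists a b, G1s a /\ G1s b /\
    a <> gone G /\ b <> gone G /\ gmul b a <> gone G.
  case: (classic (gmul q p = gone G)) => [e|ne]; last by exists p, q.
  exists p, p; split; first done; split; first done; split; first done; split; first done.
  move=> e2; apply: npq.
  by rewrite (ginv_uniq e2) (ginv_uniq e).
have [c [hc nc]] : exists c, G2s c /\ c <> gone G.
  move: c2 => [x [y [hx [hy nxy]]]].
  case: (classic (x = gone G)) => [ex|nx]; last by exists x.
  exists y; split => // e; apply: nxy; by rewrite ex e.
have nci : ginv c <> gone G := ginv_neq1 nc.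
pose u := gmul a (gmul c b).
pose v := gmul c (gmul u (ginv c)).
have hu : forall y, act u y = act a (act c (act b y)) by move=> y; rewrite /u !h2.
have hv : forall y, act v y = act c (act u (act (ginv c) y)) by move=> y; rewrite /v !h2.
pose Ap := fun y => exists z, X1 z /\ y = act a (act c z).
pose Am := fun y => exists z, X1 z /\ y = act (ginv b) (act (ginv c) z).
pose Bp := fun y => exists w, Ap w /\ y = act c w.
pose Bm := fun y => exists w, Am w /\ y = act c w.
pose Q := fun y => X1 (act (ginv c) y).
have U1 : forall y, Ap y \/ X2 y -> Ap (act u y).
  move=> y [[z [hz ->]] | hy]; rewrite hu.
  - exists (act (gmul b a) (act c z)); split; last by rewrite h2.
    apply: p1 => //; first exact: sM. exact: p2.
  - exists (act b y); split => //. exact: p1.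
have U2 : forall y, Am (act u y) \/ X2 (act u y) -> Am y.
  move=> y H. exists (act (ginv a) (act u y)). split; last by rewrite hu !ail.
  case: H => [[z [hz ->]] | hy].
  - rewrite -h2 -ginvM. apply: p1.
    + apply: sV; exact: sM.
    + exact: ginv_neq1.
    + apply: p2 => //; exact: tV.
  - apply: p1 => //; [exact: sV | exact: ginv_neq1].
have U3 : forall y, Bp y \/ X1 y -> Bp (act v y).
  move=> y [[w [hw ->]] | hy]; rewrite hv.
  - exists (act u w); split; [apply: U1; by left | by rewrite ail].
  - exists (act u (act (ginv c) y)); split => //. apply: U1; right.
    apply: p2 => //; exact: tV.
have U4 : forall y, Bm (act v y) \/ X1 (act v y) -> Bm y.
  move=> y H. exists (act (ginv c) y). split; last by rewrite air.
  apply: U2. case: H => [[w [hw hvw]] | hy].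
  - left. move: hvw; rewrite hv => /(f_equal (act (ginv c))); rewrite !ail => ->.
    done.
  - right. rewrite hv in hy. have := p2 (ginv c) (tV _ hc) nci _ hy. by rewrite ail.
have V1 : forall y, Ap y -> X1 y.
  move=> y [z [hz ->]]; apply: p1 => //; exact: p2.
have V2 : forall y, Am y -> X1 y.
  move=> y [z [hz ->]]; apply: p1 => //; [exact: sV | exact: ginv_neq1 |].
  apply: p2 => //; exact: tV.
have V3 : forall y, Bp y -> X2 y.
  move=> y [w [hw ->]]; apply: p2 => //; exact: V1.
have V4 : forall y, Bm y -> X2 y.
  move=> y [w [hw ->]]; apply: p2 => //; exact: V2.
pose L := lbl7 X1 X2 Ap Am Bp Bm Q.
have LE : forall y, [/\ L y iX1 = cb (X1 y), L y iX2 = cb (X2 y), L y iAp = cb (Ap y),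
    L y iAm = cb (Am y) & [/\ L y iBp = cb (Bp y), L y iBm = cb (Bm y)
    & L y (@Ordinal 7 6 isT) = cb (Q y)]].
  by move=> y; rewrite /L /lbl7 !ffunE.
exists u, v, (fun g => L (act g x0)). split; [|split].
- move=> g. rewrite (h2 u g) (h2 v g). set y := act g x0.
  have [e1 e2 e3 e4 [e5 e6 _]] := LE y.
  have [f1 f2 f3 f4 [f5 f6 _]] := LE (act u y).
  have [k1 k2 k3 k4 [k5 k6 _]] := LE (act v y).
  rewrite /Good e1 e2 e3 e4 e5 e6 f2 f3 f4 k1 k5 k6.
  do !split.
  + move=> /orP H; apply/cbP; apply: U1; case: H => /cbP; auto.
  + move=> /orP H; apply/cbP; apply: U2; case: H => /cbP; auto.
  + move=> /orP H; apply/cbP; apply: U3; case: H => /cbP; auto.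
  + move=> /orP H; apply/cbP; apply: U4; case: H => /cbP; auto.
  + by move=> /cbP H; apply/cbP; apply: V1.
  + by move=> /cbP H; apply/cbP; apply: V2.
  + by move=> /cbP H; apply/cbP; apply: V3.
  + by move=> /cbP H; apply/cbP; apply: V4.
- exists (gone G). rewrite h1. have [e1 e2 _ _ _] := LE x0.
  rewrite e1 e2; split; [exact/cbP | by apply/negP => /cbP].
- exists c. rewrite (h2 v c). have [_ _ _ _ [_ _ e7]] := LE (act c x0).
  have [_ _ _ _ [_ _ f7]] := LE (act v (act c x0)).
  move=> E. have : cb (Q (act v (act c x0))) = cb (Q (act c x0)) by rewrite -e7 -f7 E.
  have q1 : Q (act v (act c x0)).
    rewrite /Q hv !ail. apply: V1; apply: U1; by right.
  have q2 : ~ Q (act c x0) by rewrite /Q ail.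
  case: cbP => // _; case: cbP => //.
Qed.

Theorem mainTheorem10 (G1 G2 : AbsGroup) :
  ConEq G1 G2 -> PingPong G1 -> PingPong G2.
Proof.
move=> hc hp; apply: facts_pingpong; apply: (transfer hc).
exact: pingpong_facts.
Qed.
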